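(* (a) $\mathsf{SP_{tot}P}=\mathsf{SPP}$, (b) $\mathsf{WP_{tot}P}=\mathsf{WPP}$, (c) $\mathsf{{C_=}_{tot}P}=\mathsf{C_=P}$, and (d) $\mathsf{P_{tot}P}=\mathsf{PP}$.
   Context: An NPTM is a non-deterministic polynomial-time Turing machine. For an NPTM $M$ and input $x$, $acc_M(x)$, $rej_M(x)$ are the numbers of accepting and rejecting paths of $M$ on $x$, and $tot_M(x)$ is the number of all computation paths of $M$ on $x$ minus $1$. $\mathsf{TotP}=\{tot_M\}$, $\mathsf{GapP}=\{acc_M-rej_M\}$ over all NPTMs $M$; $\mathsf{Gap_{tot}P}$ is the class of differences $g-h$ with $g,h\in\mathsf{TotP}$; $\mathsf{FP}$ is the class of polynomial-time computable functions. For a function class $\mathcal{F}\in\{\mathsf{GapP},\mathsf{Gap_{tot}P}\}$ define: $\mathsf{SPP}$ (resp. $\mathsf{SP_{tot}P}$): languages $L$ with some $f\in\mathsf{GapP}$ (resp. $\mathsf{Gap_{tot}P}$) such that $f(x)=1$ if $x\in L$ and $f(x)=0$ if $x\notin L$. $\mathsf{WPP}$ (resp. $\mathsf{WP_{tot}P}$): languages $L$ with some $f\in\mathsf{GapP}$ (resp. $\mathsf{Gap_{tot}P}$) and some $g\in\mathsf{FP}$ with $0\notin\mathrm{range}(g)$ such that $f(x)=g(x)$ if $x\in L$ and $f(x)=0$ if $x\notin L$. $\mathsf{C_=P}$ (resp. $\mathsf{{C_=}_{tot}P}$): languages $L$ with some $f\in\mathsf{GapP}$ (resp. $\mathsf{Gap_{tot}P}$)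 such that $x\in L\iff f(x)=0$. $\mathsf{PP}$ (resp. $\mathsf{P_{tot}P}$): languages $L$ with some $f\in\mathsf{GapP}$ (resp. $\mathsf{Gap_{tot}P}$) such that $x\in L\iff f(x)>0$. *)

(* Defs.v *)
From HB Require Import structures.
From mathcomp Require Import all_boot all_order all_algebra.
Set Implicit Arguments. Unset Strict Implicit. Unset Printing Implicit Defensive.
Import GRing.Theory Num.Theory.

(* States are naturals < tm_nstates, tape symbols are naturals < tm_nsyms;
   symbol 0 is the blank, 1 encodes the input bit 'false'/0, 2 encodes 'true'/1. *)
Inductive move := MoveL | MoveR | MoveS.
Definition move_eqb (a b : move) : bool :=
  match a, b with MoveL, MoveL | MoveR, MoveR | MoveS, MoveS => true | _, _ => false end.
Lemma move_eqP : Equality.axiom move_eqb.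
Proof. by case; case; constructor. Qed.
HB.instance Definition _ := hasDecEq.Build move move_eqP.

Record TM := {
  tm_nstates : nat;
  tm_nsyms : nat;
  tm_start : nat;
  tm_accept : nat -> bool;
  (* nondeterministic transition relation: (state, read symbol) |->
     list of (new state, written symbol, head move); empty list = halt *)
  tm_delta : nat -> nat -> seq (nat * nat * move)
}.

Definition wf_TM (M : TM) : Prop :=
  [/\ 3 <= tm_nsyms M, tm_start M < tm_nstates M,
      (forall q s, all (fun t => (t.1.1 < tm_nstates M) && (t.1.2 < tm_nsyms M))
                       (tm_delta M q s)),
      (forall q s, (tm_nstates M <= q) || (tm_nsyms M <= s) -> tm_delta M q s = [::])
    & (forall q s, uniq (tm_delta M q s))].

Definition deterministic (M : TM) : Prop := forall q s, size (tm_delta M q s) <= 1.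

(* configuration: state, left part of tape (reversed, nearest cell first),
   right part of tape starting with the scanned cell *)
Record config := Config { c_state : nat; c_left : seq nat; c_right : seq nat }.

Definition read (c : config) : nat := head 0 (c_right c).

Definition apply_trans (c : config) (t : nat * nat * move) : config :=
  let: (q, s, m) := t in
  let r := s :: behead (c_right c) in
  match m with
  | MoveS => Config q (c_left c) r
  | MoveR => Config q (s :: c_left c) (behead r)
  | MoveL => match c_left c with
             | a :: l => Config q l (a :: r)
             | [::] => Config q [::] (0 :: r)
             end
  end.

Definition step (M : TM) (c : config) : seq config :=
  map (apply_trans c) (tm_delta M (c_state c) (read c)).

Definition encode_bit (b : bool) : nat := if b then 2 else 1.

Definition init (M : TM) (x : seq bool) : config :=
  Config (tm_start M) [::] (map encode_bit x).

Fixpoint halts_within (M : TM) (fuel : nat) (c : config) : bool :=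
  nilp (step M c) ||
  match fuel with 0 => false | f.+1 => all (halts_within M f) (step M c) end.

Definition poly_time_with (M : TM) (k : nat) : Prop :=
  forall x : seq bool, halts_within M (size x ^ k + k) (init M x).

Fixpoint leaves (M : TM) (fuel : nat) (c : config) : seq config :=
  match step M c with
  | [::] => [:: c]
  | cs => match fuel with 0 => [:: c] | f.+1 => flatten (map (leaves M f) cs) end
  end.

Definition paths (M : TM) (k : nat) (x : seq bool) : seq config :=
  leaves M (size x ^ k + k) (init M x).

Definition acc (M : TM) (k : nat) (x : seq bool) : nat :=
  count (fun c => tm_accept M (c_state c)) (paths M k x).
Definition rej (M : TM) (k : nat) (x : seq bool) : nat :=
  count (fun c => ~~ tm_accept M (c_state c)) (paths M k x).
Definition tot (M : TM) (k : nat) (x : seq bool) : nat := (size (paths M k x)).-1.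

Definition NPTM (M : TM) (k : nat) : Prop := wf_TM M /\ poly_time_with M k.

Local Open Scope ring_scope.
Definition GapP (f : seq bool -> int) : Prop :=
  exists M k, NPTM M k /\ forall x, f x = (acc M k x)%:Z - (rej M k x)%:Z.

Definition TotP (f : seq bool -> nat) : Prop :=
  exists M k, NPTM M k /\ forall x, f x = tot M k x.

Definition GaptotP (f : seq bool -> int) : Prop :=
  exists g h, TotP g /\ TotP h /\ forall x, f x = (g x)%:Z - (h x)%:Z.

(* output of a deterministic machine: the binary word (symbols 1/2, most
   significant bit first) starting at the head position of the final
   configuration, read as a natural number *)
Fixpoint out_bits (s : seq nat) : seq bool :=
  match s with
  | 1 :: t => false :: out_bits t
  | 2 :: t => true :: out_bits t
  | _ => [::]
  end.
Definition bits_val (bs : seq bool) : nat := foldl (fun n (b : bool) => n.*2 + b) 0 bs.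

Definition FP (g : seq bool -> nat) : Prop :=
  exists M k, NPTM M k /\ deterministic M /\
    forall x, g x = bits_val (out_bits (c_right (head (init M x) (paths M k x)))).

Definition language := seq bool -> bool.

Definition SPP (L : language) : Prop :=
  exists f, GapP f /\ forall x, f x = (if L x then 1 else 0).
Definition SPtotP (L : language) : Prop :=
  exists f, GaptotP f /\ forall x, f x = (if L x then 1 else 0).

Definition WPP (L : language) : Prop :=
  exists f g, GapP f /\ FP g /\ (forall x, g x <> 0%N) /\
    forall x, f x = (if L x then (g x)%:Z else 0).
Definition WPtotP (L : language) : Prop :=
  exists f g, GaptotP f /\ FP g /\ (forall x, g x <> 0%N) /\
    forall x, f x = (if L x then (g x)%:Z else 0).

Definition CeqP (L : language) : Prop :=
  exists f, GapP f /\ forall x, L x <-> f x = 0.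
Definition CeqtotP (L : language) : Prop :=
  exists f, GaptotP f /\ forall x, L x <-> f x = 0.

Definition PP (L : language) : Prop :=
  exists f, GapP f /\ forall x, L x <-> 0 < f x.
Definition PtotP (L : language) : Prop :=
  exists f, GaptotP f /\ forall x, L x <-> 0 < f x.

(* Main.v *)
From HB Require Import structures.
Require Import Defs.
From mathcomp Require Import all_boot all_order all_algebra.
From mathcomp Require Import zify.
Set Implicit Arguments. Unset Strict Implicit. Unset Printing Implicit Defensive.

Definition cfg_t (c : config) := (c_state c, c_left c, c_right c).
Definition cfg_u (t : nat * seq nat * seq nat) := Config t.1.1 t.1.2 t.2.
Lemma cfgK : cancel cfg_t cfg_u. Proof. by case. Qed.
HB.instance Definition _ := Equality.copy config (can_type cfgK).

Lemma leavesE M f c : leaves M f c =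
  if step M c is [::] then [:: c] else
  if f is f'.+1 then flatten (map (leaves M f') (step M c)) else [:: c].
Proof. by case: f => [|f] /=; case: (step M c). Qed.

Lemma haltsE M f c : halts_within M f c =
  nilp (step M c) || (if f is f'.+1 then all (halts_within M f') (step M c) else false).
Proof. by case: f. Qed.

Lemma leaves0 M f c : step M c = [::] -> leaves M f c = [:: c].
Proof. by move=> E; rewrite leavesE E. Qed.
Lemma halts0 M f c : step M c = [::] -> halts_within M f c.
Proof. by move=> E; rewrite haltsE E. Qed.
Lemma leavesS M f c cs : step M c = cs -> ~~ nilp cs ->
  leaves M f.+1 c = flatten (map (leaves M f) cs).
Proof. by move=> <-; rewrite leavesE; case: (step M c). Qed.
Lemma haltsS M f c cs : step M c = cs -> ~~ nilp cs ->
  halts_within M f.+1 c = all (halts_within M f) cs.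
Proof. by move=> <-; rewrite haltsE; case: (step M c). Qed.
Lemma halts_0 M c : halts_within M 0 c -> step M c = [::].
Proof. by rewrite haltsE orbF => /nilP. Qed.

Lemma mono M f f' c : f <= f' -> halts_within M f c ->
  halts_within M f' c /\ leaves M f' c = leaves M f c.
Proof.
elim: f f' c => [|f IH] f' c Hle.
  by move/halts_0 => E; split; [exact: halts0 | rewrite !leaves0].
case E: (step M c) => [|d ds]; first by move=> _; split; [exact: halts0 | rewrite !leaves0].
case: f' Hle => [//|f'] Hle.
have nE : ~~ nilp (d :: ds) by [].
rewrite !(haltsS _ E nE) !(leavesS _ E nE) => Hall.
clear E nE; move: (d :: ds) Hall => cs Hall.
split.
  apply/allP => e He; have [A _] := IH f' e Hle (allP Hall e He); exact A.
by congr flatten; apply eq_in_map => e He; exact (IH f' e Hle (allP Hall e He)).2.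
Qed.

Lemma sim M N (phi : config -> config) (inv : pred config) :
  (forall c, inv c -> step N (phi c) = map phi (step M c)) ->
  (forall c, inv c -> all inv (step M c)) ->
  forall f c, inv c -> leaves N f (phi c) = map phi (leaves M f c) /\
    halts_within N f (phi c) = halts_within M f c.
Proof.
move=> Hs Hi; elim=> [|f IH] c Hc.
  by rewrite !leavesE !haltsE Hs //; case: (step M c).
have Hall := Hi c Hc.
case E: (step M c) => [|d ds].
  by rewrite !leaves0 ?halts0 // Hs // E.
have E' : step N (phi c) = map phi (d :: ds) by rewrite Hs // E.
have nE : ~~ nilp (map phi (d :: ds)) by [].
have nE' : ~~ nilp (d :: ds) by [].
rewrite (leavesS _ E nE') (leavesS _ E' nE) (haltsS _ E nE') (haltsS _ E' nE).
rewrite E in Hall.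
clear E E' nE nE'; move: (d :: ds) Hall => cs Hall.
split.
  rewrite map_flatten -!map_comp; congr flatten; apply eq_in_map => e He /=.
  exact (IH e (allP Hall e He)).1.
rewrite all_map; apply eq_in_all => e He /=; exact (IH e (allP Hall e He)).2.
Qed.

Lemma step_sim M c d : c_state c = c_state d -> c_left c = c_left d -> read c = read d ->
  behead (c_right c) = behead (c_right d) -> step M c = step M d.
Proof.
case: c => q l r; case: d => q' l' r' /= -> -> Hr Hb.
rewrite /step /= Hr; apply eq_map => [[[q0 s] m]] /=. by rewrite Hb.
Qed.

Lemma leaves_similar M f c d : c_state c = c_state d -> c_left c = c_left d -> read c = read d ->
  behead (c_right c) = behead (c_right d) ->
  map c_state (leaves M f c) = map c_state (leaves M f d) /\
  halts_within M f c = halts_within M f d.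
Proof.
move=> H1 H2 H3 H4; rewrite !leavesE !haltsE (step_sim M H1 H2 H3 H4).
by case: f => [|f]; case: (step M d) => [|e es] /=; rewrite ?H1.
Qed.

Lemma leaves_inv M (inv : pred config) : (forall c, inv c -> all inv (step M c)) ->
  forall f c, inv c -> all inv (leaves M f c).
Proof.
move=> H; elim=> [|f IH] c Hc; rewrite leavesE.
  by case: (step M c) => /=; rewrite Hc.
have := H c Hc; case: (step M c) => [|d ds] Hall; first by rewrite /= Hc.
move: (d :: ds) Hall => cs Hall.
apply/allP => e /flattenP [l /mapP [d' Hd' ->] He].
exact: (allP (IH d' (allP Hall d' Hd')) e He).
Qed.

Lemma leaves_pos M f c : 0 < size (leaves M f c).
Proof.
elim: f c => [|f IH] c; rewrite leavesE; case: (step M c) => [|d ds] //=.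
by rewrite size_cat addn_gt0 IH.
Qed.

Lemma apply_state c q s m : c_state (apply_trans c (q, s, m)) = q.
Proof. by case: m => //=; case: (c_left c). Qed.

Lemma step_state M c : wf_TM M -> all (fun d => c_state d < tm_nstates M) (step M c).
Proof.
case=> _ _ H3 _ _; rewrite /step all_map; apply/allP => [[[q s] m]] Ht /=.
have /andP[Hq _] := allP (H3 (c_state c) (read c)) _ Ht.
by rewrite apply_state.
Qed.

Lemma fuel_le n k k' : k + 2 <= k' -> n ^ k + k < n ^ k' + k'.
Proof.
case: n => [|n] H.
  rewrite (exp0n (_ : 0 < k')); last lia.
  have : 0 ^ k <= 1 by case: k {H} => // k; rewrite exp0n.
  lia.
have Hk : k <= k' by lia.
have := @leq_pexp2l n.+1 k k' isT Hk. lia.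
Qed.

Definition dbl (M : TM) (p : nat -> bool) : TM :=
  {| tm_nstates := (tm_nstates M).+2; tm_nsyms := tm_nsyms M; tm_start := tm_start M;
     tm_accept := tm_accept M;
     tm_delta := fun q s =>
       if [&& q < tm_nstates M, s < tm_nsyms M, p q & nilp (tm_delta M q s)]
       then [:: (tm_nstates M, s, MoveS); ((tm_nstates M).+1, s, MoveS)]
       else tm_delta M q s |}.

Lemma wf_dbl M p : wf_TM M -> wf_TM (dbl M p).
Proof.
case=> H1 H2 H3 H4 H5; split => //=.
- lia.
- move=> q s; case: ifP => [/and4P[_ Hs _ _]|_] /=.
    rewrite Hs /=; apply/andP; split; lia.
  apply/allP => t Ht; have /andP[a b] := allP (H3 q s) t Ht; rewrite b andbT; lia.
- move=> q s Hqs; case: ifP => [/and4P[a b _ _]|_]; first by exfalso; case/orP: Hqs; lia.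
  apply: H4; case/orP: Hqs => h; apply/orP; [left|right]; lia.
- move=> q s; case: ifP => _ //=; rewrite inE andbT; apply/eqP => -[]; lia.
Qed.

Definition dinv M c := [&& c_state c < tm_nstates M, all (fun s => s < tm_nsyms M) (c_left c)
  & all (fun s => s < tm_nsyms M) (c_right c)].

Lemma dinv_read M c : wf_TM M -> dinv M c -> read c < tm_nsyms M.
Proof.
case=> H1 _ _ _ _ /and3P[_ _]; rewrite /read; case: (c_right c) => [|a r] /=; first lia.
by case/andP.
Qed.

Lemma dinv_step M c : wf_TM M -> dinv M c -> all (dinv M) (step M c).
Proof.
move=> Hw; case: (Hw) => H1 H2 H3 H4 H5 Hc.
have Hrd := dinv_read Hw Hc.
move: Hc; rewrite /step all_map; move=> /and3P[Hq Hl Hr].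
apply/allP => [[[q s] m]] Ht.
have /andP[/= Hq' Hs'] := allP (H3 _ _) _ Ht.
have HZ : 0 < tm_nsyms M by lia.
have Hb : all (fun s => s < tm_nsyms M) (behead (c_right c)).
  by case: (c_right c) Hr => //= ? ? /andP[].
move: Hl Hb; case: c {Hq Hr Hrd Ht} => q0 l r /= Hl Hb.
case: m => /=; rewrite /dinv /=.
- case: l Hl => [|a l] /=; first by rewrite Hq' HZ Hs' Hb.
  by case/andP => -> ->; rewrite Hq' Hs' Hb.
- by rewrite Hq' Hs' Hl.
- by rewrite Hq' Hl Hs' Hb.
Qed.

Lemma step_dbl M p c : wf_TM M -> dinv M c ->
  step (dbl M p) c = if nilp (step M c) && p (c_state c) then
    [:: apply_trans c (tm_nstates M, read c, MoveS); apply_trans c ((tm_nstates M).+1, read c, MoveS)]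
  else step M c.
Proof.
move=> Hw Hc; have Hrd := dinv_read Hw Hc.
case/and3P: (Hc) => Hq _ _.
rewrite /step /= Hq Hrd /= /nilp size_map.
by case: (p _); case: (tm_delta M _ _).
Qed.

Lemma step_dbl_new M p c : wf_TM M -> tm_nstates M <= c_state c -> step (dbl M p) c = [::].
Proof.
case=> _ _ _ H4 _ H; rewrite /step /=.
have -> : (c_state c < tm_nstates M) = false by lia.
by rewrite /= H4 // H.
Qed.

Lemma all_cons1 T (a : pred T) x s : all a (x :: s) = a x && all a s. Proof. by []. Qed.
Lemma flatten_cons1 T (s : seq T) ss : flatten (s :: ss) = s ++ flatten ss. Proof. by []. Qed.

Lemma dbl_list M p f cs : wf_TM M ->
  (forall c, dinv M c -> halts_within M f c -> halts_within (dbl M p) f.+1 c /\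
     size (leaves (dbl M p) f.+1 c) = size (leaves M f c) + count (fun d => p (c_state d)) (leaves M f c)) ->
  all (fun e => dinv M e && halts_within M f e) cs ->
  all (halts_within (dbl M p) f.+1) cs /\
  size (flatten (map (leaves (dbl M p) f.+1) cs)) =
    size (flatten (map (leaves M f) cs)) + count (fun d => p (c_state d)) (flatten (map (leaves M f) cs)).
Proof.
move=> Hw IH; elim: cs => [|e es IHs] //.
rewrite !all_cons1 !map_cons !flatten_cons1 => /andP[/andP[He1 He2] Hes].
have [A B] := IH e He1 He2; have [C D] := IHs Hes.
rewrite A C !size_cat count_cat B D; split=> //; lia.
Qed.

Lemma dbl_halt M p f c : wf_TM M -> dinv M c -> step M c = [::] ->
  halts_within (dbl M p) f.+1 c /\
  size (leaves (dbl M p) f.+1 c) = size [:: c] + count (fun d => p (c_state d)) [:: c].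
Proof.
move=> Hw Hc E.
have Hs := step_dbl p Hw Hc; rewrite E /= in Hs.
case Hp: (p (c_state c)) Hs => Hs; last by rewrite (halts0 _ Hs) (leaves0 _ Hs) /= Hp.
have N1 : step (dbl M p) (apply_trans c (tm_nstates M, read c, MoveS)) = [::]
  by apply: step_dbl_new => //; rewrite apply_state.
have N2 : step (dbl M p) (apply_trans c ((tm_nstates M).+1, read c, MoveS)) = [::]
  by apply: step_dbl_new => //; rewrite apply_state.
have nE : ~~ nilp [:: apply_trans c (tm_nstates M, read c, MoveS);
                     apply_trans c ((tm_nstates M).+1, read c, MoveS)] by [].
rewrite (haltsS _ Hs nE) (leavesS _ Hs nE) !all_cons1 !map_cons !flatten_cons1.
rewrite (halts0 _ N1) (halts0 _ N2) (leaves0 _ N1) (leaves0 _ N2).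
by rewrite /= Hp.
Qed.

Lemma dbl_leaves M p : wf_TM M -> forall f c, dinv M c -> halts_within M f c ->
  halts_within (dbl M p) f.+1 c /\
  size (leaves (dbl M p) f.+1 c) = size (leaves M f c) + count (fun d => p (c_state d)) (leaves M f c).
Proof.
move=> Hw; elim=> [|f IH] c Hc Hh; case E: (step M c) => [|d ds].
2: by rewrite haltsE E /= in Hh.
1,2: by rewrite (leaves0 _ E); apply: dbl_halt.
have Hs : step (dbl M p) c = d :: ds by rewrite step_dbl // E.
have nE : ~~ nilp (d :: ds) by [].
move: Hh; rewrite (haltsS _ E nE) (leavesS _ E nE) (haltsS _ Hs nE) (leavesS _ Hs nE) => Hh.
apply: dbl_list => //.
have := dinv_step Hw Hc; rewrite E; move: (d :: ds) Hh => cs Hh Hi.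
apply/allP => e He; by rewrite (allP Hh e He) (allP Hi e He).
Qed.

Lemma init_dinv M x : wf_TM M -> dinv M (init M x).
Proof.
case=> H1 H2 _ _ _; rewrite /dinv /= H2 /=.
apply/allP => s /mapP [b _ ->]; case: b => /=; lia.
Qed.

Lemma GapP_tot f : GapP f -> GaptotP f.
Proof.
move=> [M [k [[Hw Hpt] Hf]]].
have key : forall p x, halts_within (dbl M p) (size x ^ k.+2 + k.+2) (init (dbl M p) x) /\
   tot (dbl M p) k.+2 x = (size (paths M k x) + count (fun d => p (c_state d)) (paths M k x)).-1.
  move=> p x.
  have [A B] := dbl_leaves p Hw (init_dinv x Hw) (Hpt x).
  have Hle : (size x ^ k + k).+1 <= size x ^ k.+2 + k.+2 by apply: fuel_le; lia.
  have [C D] := mono Hle A.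
  change (init (dbl M p) x) with (init M x).
  split; first exact C.
  by rewrite /tot /paths D B.
exists (fun x => tot (dbl M (tm_accept M)) k.+2 x),
       (fun x => tot (dbl M (fun q => ~~ tm_accept M q)) k.+2 x).
split; [|split].
- exists (dbl M (tm_accept M)), k.+2; split => //; split; [exact: wf_dbl | move=> x; exact (key _ x).1].
- exists (dbl M (fun q => ~~ tm_accept M q)), k.+2; split => //; split;
    [exact: wf_dbl | move=> x; exact (key _ x).1].
- move=> x; rewrite Hf (key _ x).2 (key _ x).2 /acc /rej.
  set a := count _ _; set r := count _ _.
  have Hs : size (paths M k x) = a + r by rewrite -(count_predC (fun c => tm_accept M (c_state c))).
  rewrite Hs; lia.
Qed.

Definition shT (Q : nat) (t : nat * nat * move) : nat * nat * move := (t.1.1 + Q, t.1.2, t.2).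
Definition shC (Q : nat) (c : config) : config := Config (c_state c + Q) (c_left c) (c_right c).

Definition uni (M1 M2 : TM) : TM :=
  {| tm_nstates := (tm_nstates M1 + tm_nstates M2).+1;
     tm_nsyms := maxn (tm_nsyms M1) (tm_nsyms M2);
     tm_start := tm_nstates M1 + tm_nstates M2;
     tm_accept := fun q => q < tm_nstates M1;
     tm_delta := fun q s =>
       if q < tm_nstates M1 then tm_delta M1 q s
       else if q < tm_nstates M1 + tm_nstates M2 then
         map (shT (tm_nstates M1)) (tm_delta M2 (q - tm_nstates M1) s)
       else if (q == tm_nstates M1 + tm_nstates M2) && (s < maxn (tm_nsyms M1) (tm_nsyms M2))
       then [:: (tm_start M1, s, MoveS); (tm_start M2 + tm_nstates M1, s, MoveS)]
       else [::] |}.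

Lemma wf_uni M1 M2 : wf_TM M1 -> wf_TM M2 -> wf_TM (uni M1 M2).
Proof.
case=> A1 A2 A3 A4 A5 [B1 B2 B3 B4 B5]; split => //=.
- lia.
- move=> q s; case: ifP => h1.
    apply/allP => t Ht; have /andP[a b] := allP (A3 q s) t Ht; apply/andP; split; lia.
  case: ifP => h2.
    rewrite all_map; apply/allP => t Ht; have /andP[a b] := allP (B3 (q - tm_nstates M1) s) t Ht.
    apply/andP; split => /=; lia.
  case: ifP => [/andP[_ hs]|_] //=.
  apply/and3P; split => //; apply/andP; split; lia.
- move=> q s H.
  case: ifP => h1.
    by apply: A4; case/orP: H => h; apply/orP; [left|right]; lia.
  case: ifP => h2.
    by rewrite B4 //; case/orP: H => h; apply/orP; [left|right]; lia.
  case: ifP => // /andP[/eqP h3 h4]; exfalso; case/orP: H; lia.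
- move=> q s; case: ifP => _; first exact: A5.
  case: ifP => _.
    rewrite map_inj_uniq; first exact: B5.
    by move=> [[a b] c] [[a' b'] c'] [] /addIn -> -> ->.
  case: ifP => _ //=; rewrite inE andbT; apply/eqP => -[]; lia.
Qed.

Lemma uni_step1 M1 M2 c : c_state c < tm_nstates M1 -> step (uni M1 M2) c = step M1 c.
Proof. by move=> h; rewrite /step /= h. Qed.

Lemma uni_step2 M1 M2 c : c_state c < tm_nstates M2 ->
  step (uni M1 M2) (shC (tm_nstates M1) c) = map (shC (tm_nstates M1)) (step M2 c).
Proof.
move=> h; rewrite /step /=.
have -> : (c_state c + tm_nstates M1 < tm_nstates M1) = false by lia.
have -> : (c_state c + tm_nstates M1 < tm_nstates M1 + tm_nstates M2) = true by lia.
rewrite addnK -!map_comp; apply: eq_map => [[[q s] m]] /=.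
by case: m => //=; case: (c_left c).
Qed.

Lemma count_sh Q l : count (fun c => c_state c < Q) (map (shC Q) l) = 0 /\
  count (fun c => ~~ (c_state c < Q)) (map (shC Q) l) = size l.
Proof.
elim: l => [|a l [IH1 IH2]] //=; rewrite IH1 IH2.
have -> : (c_state a + Q < Q) = false by lia.
by [].
Qed.

Lemma count_lt Q l : all (fun c => c_state c < Q) l ->
  count (fun c => c_state c < Q) l = size l /\ count (fun c => ~~ (c_state c < Q)) l = 0.
Proof.
elim: l => [|a l IH] //= /andP[-> H]; have [-> ->] := IH H; by [].
Qed.

Lemma read_init_le M x : read (init M x) <= 2.
Proof. by rewrite /read /=; case: x => [|[] x]. Qed.

Lemma GaptotP_Gap f : GaptotP f -> GapP f.
Proof.
move=> [g [h [[M1 [k1 [[W1 P1] Hg]]] [[M2 [k2 [[W2 P2] Hh] Hf]]]]]].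
set N := uni M1 M2; set Q1 := tm_nstates M1.
have WN : wf_TM N by exact: wf_uni.
have key : forall x, halts_within N (size x ^ (k1 + k2 + 2) + (k1 + k2 + 2)) (init N x) /\
   acc N (k1 + k2 + 2) x = (tot M1 k1 x).+1 /\ rej N (k1 + k2 + 2) x = (tot M2 k2 x).+1.
  move=> x.
  set F := size x ^ (k1 + k2 + 2) + (k1 + k2 + 2).
  have HF : F = F.-1.+1 by rewrite prednK // /F; lia.
  set F' := F.-1.
  have HF1 : (size x ^ k1 + k1 <= F')%N by have := @fuel_le (size x) k1 (k1 + k2 + 2); lia.
  have HF2 : (size x ^ k2 + k2 <= F')%N by have := @fuel_le (size x) k2 (k1 + k2 + 2); lia.
  set R := map encode_bit x; set r := read (init N x).
  set c1 := Config (tm_start M1) [::] (r :: behead R).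
  set c2 := Config (tm_start M2) [::] (r :: behead R).
  have Hstep : step N (init N x) = [:: c1; shC Q1 c2].
    rewrite /step /=.
    have -> : (tm_nstates M1 + tm_nstates M2 < tm_nstates M1)%N = false by lia.
    rewrite ltnn eqxx /=.
    have -> : (head 0%N (map encode_bit x) < maxn (tm_nsyms M1) (tm_nsyms M2))%N = true.
      have H := read_init_le N x; rewrite /read /= in H; case: W1 => H1 _ _ _ _; lia.
    by [].
  have nE : ~~ nilp [:: c1; shC Q1 c2] by [].
  have s1 : tm_start M1 < tm_nstates M1 by case: W1.
  have s2 : tm_start M2 < tm_nstates M2 by case: W2.
  have [S1a S1b] := leaves_similar M1 F' (c := c1) (d := init M1 x) erefl erefl erefl erefl.
  have [M1a M1b] := mono HF1 (P1 x).
  have st1 : forall c, (fun c => c_state c < tm_nstates M1) c ->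
      step N ((fun c => c) c) = map (fun c => c) (step M1 c).
    by move=> c hc; rewrite map_id uni_step1.
  have [L1a L1b] := sim st1 (fun c _ => step_state c W1) F' (c := c1) s1.
  rewrite map_id in L1a.
  have A1 := leaves_inv (fun c _ => step_state c W1) F' (c := c1) s1.
  have [S2a S2b] := leaves_similar M2 F' (c := c2) (d := init M2 x) erefl erefl erefl erefl.
  have [M2a M2b] := mono HF2 (P2 x).
  have [L2a L2b] := sim (@uni_step2 M1 M2) (fun c _ => step_state c W2) F' (c := c2)
     s2.
  have sz1 : size (leaves M1 F' c1) = (tot M1 k1 x).+1.
    rewrite -(size_map c_state) S1a size_map M1b /tot prednK //; exact: leaves_pos.
  have sz2 : size (leaves M2 F' c2) = (tot M2 k2 x).+1.
    rewrite -(size_map c_state) S2a size_map M2b /tot prednK //; exact: leaves_pos.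
  have Hp : paths N (k1 + k2 + 2) x = leaves M1 F' c1 ++ map (shC Q1) (leaves M2 F' c2) ++ [::].
    rewrite /paths -/F HF (leavesS _ Hstep nE) !map_cons !flatten_cons1 L1a L2a.
    by [].
  split.
    rewrite -/F HF (haltsS _ Hstep nE) !all_cons1 L1b L2b S1b S2b M1a M2a.
    by [].
  have [C1 C2] := count_lt A1.
  have [D1 D2] := count_sh Q1 (leaves M2 F' c2).
  rewrite /acc /rej Hp /= !count_cat C1 C2 D1 D2 /= sz1 sz2; split; lia.
exists N, (k1 + k2 + 2); split; first by split => // x; exact (key x).1.
move=> x; rewrite Hf Hg Hh (key x).2.1 (key x).2.2; lia.
Qed.

Lemma GapP_iff f : GapP f <-> GaptotP f.
Proof. split; [exact: GapP_tot | exact: GaptotP_Gap]. Qed.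

Theorem corollary2 :
  (forall L : language, SPtotP L <-> SPP L) /\
  (forall L : language, WPtotP L <-> WPP L) /\
  (forall L : language, CeqtotP L <-> CeqP L) /\
  (forall L : language, PtotP L <-> PP L).
Proof.
split; [|split; [|split]] => L.
- by split=> -[f [H1 H2]]; exists f; split=> //; apply/GapP_iff.
- by split=> -[f [g [H1 H2]]]; exists f, g; split=> //; apply/GapP_iff.
- by split=> -[f [H1 H2]]; exists f; split=> //; apply/GapP_iff.
- by split=> -[f [H1 H2]]; exists f; split=> //; apply/GapP_iff.
Qed.
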